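(* Let $n\ge 4$ and let $S_{n-3,1}$ be the tree on $n$ vertices consisting of a vertex $u$ adjacent to $n-3$ leaves and to one further vertex $w$ of degree $2$ whose other neighbor is a leaf. Then $\rho_{ABC}(S_{n-3,1})>\sqrt{n-3.5}$.
   Context: For a simple connected graph $G$ with vertex set $\{v_1,\dots,v_n\}$ and degrees $d_i$, the ABC matrix is $M(G)=(m_{ij})_{n\times n}$ with $m_{ij}=\sqrt{(d_i+d_j-2)/(d_id_j)}$ if $v_iv_j$ is an edge and $m_{ij}=0$ otherwise. The ABC spectral radius $\rho_{ABC}(G)$ is the largest eigenvalue of $M(G)$. *)

(* Defs.v *)
From HB Require Import structures.
From mathcomp Require Import all_boot all_order all_algebra.
From mathcomp Require Import classical_sets reals.
Set Implicit Arguments. Unset Strict Implicit. Unset Printing Implicit Defensive.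
Import Order.TTheory GRing.Theory Num.Theory.
Local Open Scope ring_scope.

(* A graph on vertex set 'I_n is given by a (symmetric, irreflexive) adjacency
   relation adj. *)
Definition deg (n : nat) (adj : rel 'I_n) (i : 'I_n) : nat :=
  #|[set j | adj i j]|.

Definition ABC_matrix (R : realType) (n : nat) (adj : rel 'I_n) : 'M[R]_n :=
  \matrix_(i, j)
    (if adj i j then
       Num.sqrt (((deg adj i)%:R + (deg adj j)%:R - 2) /
                 ((deg adj i)%:R * (deg adj j)%:R))
     else 0).

(* ABC spectral radius: the largest eigenvalue of the ABC matrix
   (the supremum of the finite, nonempty set of real eigenvalues). *)
Definition rho_ABC (R : realType) (n : nat) (adj : rel 'I_n) : R :=
  sup [set l : R | eigenvalue (ABC_matrix R adj) l].

(* The tree S_{n-3,1}: vertex 0 = u, vertex 1 = w, vertex 2 = the leaf adjacent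
   to w, vertices 3..n-1 = the n-3 leaves adjacent to u. *)
Definition S_adj (n : nat) : rel 'I_n := fun i j =>
  let a := val i in let b := val j in
  [|| (a == 0%N) && (b == 1%N), (a == 1%N) && (b == 0%N),
      (a == 1%N) && (b == 2%N), (a == 2%N) && (b == 1%N),
      (a == 0%N) && (3 <= b)%N | (3 <= a)%N && (b == 0%N)].

(* Main.v *)
Require Import Defs.
From HB Require Import structures.
From mathcomp Require Import all_boot all_order all_algebra.
From mathcomp Require Import classical_sets reals.
From mathcomp Require Import zify ring lra.
Import Order.TTheory GRing.Theory Num.Theory.
Local Open Scope ring_scope.

Definition Sp (a b : nat) : bool :=
  [|| (a == 0%N) && (b == 1%N), (a == 1%N) && (b == 0%N),
      (a == 1%N) && (b == 2%N), (a == 2%N) && (b == 1%N),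
      (a == 0%N) && (3 <= b)%N | (3 <= a)%N && (b == 0%N)].

Lemma degE n (i : 'I_n) : deg (@S_adj n) i = count (Sp (val i)) (iota 0 n).
Proof.
rewrite /deg cardsE cardE /enum_mem size_filter -val_enum_ord count_map enumT.
by apply: eq_count.
Qed.

Definition Dg (m a : nat) : nat :=
  if a == 0%N then m.+2 else if a == 1%N then 2%N else 1%N.

Lemma dgE m a : count (Sp a) (iota 0 m.+4) = Dg m a.
Proof.
rewrite /Dg.
case: eqP => [->|a0].
  rewrite /=.
  rewrite (@eq_in_count _ _ predT); first by rewrite count_predT size_iota; lia.
  move=> x; rewrite mem_iota => /andP[h _]; rewrite /Sp /=; lia.
case: eqP => [->|a1].
  rewrite /=.
  rewrite (@eq_in_count _ _ pred0); first by rewrite count_pred0.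
  move=> x; rewrite mem_iota => /andP[h _]; rewrite /Sp /=; lia.
case: (a =P 2%N) => [->|a2].
  rewrite /=.
  rewrite (@eq_in_count _ _ pred0); first by rewrite count_pred0.
  move=> x; rewrite mem_iota => /andP[h _]; rewrite /Sp /=; lia.
rewrite (@eq_in_count _ _ (pred1 0%N)); last first.
  move=> x _; rewrite /Sp /=; lia.
rewrite /= (@eq_in_count _ _ pred0); first by rewrite count_pred0.
move=> x; rewrite mem_iota => /andP[h _]; rewrite /=; lia.
Qed.
Lemma eig_ub (R : realType) n (A : 'M[R]_n) l :
  eigenvalue A l -> l <= \sum_i \sum_j `|A i j|.
Proof.
case/eigenvalueP => v vA v0.
set B := \sum_i \sum_j `|A i j|.
set S := \sum_i `|v 0 i|.
have S0 : 0 < S.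
  rewrite lt_def sumr_ge0 // andbT; apply: contra v0 => /eqP S0.
  apply/eqP/rowP => i; rewrite mxE; apply/normr0_eq0.
  exact: (psumr_eq0P _ S0).
have rowB j : \sum_i `|A j i| <= B.
  rewrite /B [X in _ <= X](bigD1 j) //= lerDl; apply: sumr_ge0 => k _; exact: sumr_ge0.
have key : `|l| * S <= S * B.
  rewrite /S mulr_sumr.
  apply: (@le_trans _ _ (\sum_i \sum_j `|v 0 j| * `|A j i|)).
    apply: ler_sum => i _.
    have -> : `|l| * `|v 0 i| = `|(v *m A) 0 i| by rewrite vA !mxE normrM.
    rewrite mxE; apply: le_trans (ler_norm_sum _ _ _) _.
    by apply: ler_sum => j _; rewrite normrM.
  rewrite exchange_big /= mulr_suml; apply: ler_sum => j _.
  by rewrite -mulr_sumr ler_wpM2l.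
have : `|l| <= B by rewrite -(ler_pM2r S0) [B * _]mulrC.
exact: le_trans (ler_norm _).
Qed.

Definition E (R : realType) (m a b : nat) : R :=
  if Sp a b then Num.sqrt (((Dg m a)%:R + (Dg m b)%:R - 2) / ((Dg m a)%:R * (Dg m b)%:R))
  else 0.

Lemma AE (R : realType) m (j k : 'I_m.+4) :
  ABC_matrix R (@S_adj m.+4) j k = E R m (val j) (val k).
Proof. by rewrite /ABC_matrix mxE !degE !dgE. Qed.

Definition Vf {R : realType} (lam t h s : R) (j : nat) : R :=
  if j == 0%N then lam * (2 * t - 1) else if j == 1%N then 2 * t * h
  else if j == 2%N then lam else s * (2 * t - 1).

Theorem lemma3p3 (R : realType) (n : nat) (hn : (4 <= n)%N) :
  Num.sqrt (n%:R - 7%:R / 2%:R) < rho_ABC R (@S_adj n).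
Proof.
case: n hn => [|[|[|[|m]]]] // _.
set c : R := (m.+1)%:R ^+ 2 / (m.+2)%:R.
set r := Num.sqrt (1 + c ^+ 2).
set t := ((1 + c) + r) / 2.
set lam := Num.sqrt t.
set h := Num.sqrt (1 / 2 : R).
set s := Num.sqrt ((m.+1)%:R / (m.+2)%:R : R).
have m2 : (m.+2)%:R != 0 :> R by rewrite pnatr_eq0.
have m2' : 2 + m%:R != 0 :> R by rewrite -natrD pnatr_eq0.
have m2p : 0 < (m.+2)%:R :> R by rewrite ltr0n.
have c0 : 0 <= c by rewrite /c divr_ge0 // ?exprn_ge0 // ltW.
have cm : m%:R <= c.
  rewrite /c ler_pdivlMr // -!natrX -natrM ler_nat; nia.
have rr : r ^+ 2 = 1 + c ^+ 2 by rewrite /r sqr_sqrtr // addr_ge0 // exprn_ge0.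
have rc : c < r.
  rewrite /r -{1}(ger0_norm c0) -sqrtr_sqr ltr_sqrt; last by rewrite ltr_wpDr // exprn_ge0.
  by rewrite ltrDr.
have ht : m%:R + 1 / 2 < t by rewrite /t; lra.
have t0 : 0 < t.
  apply: le_lt_trans ht; rewrite addr_ge0 //; lra.
have ll : lam * lam = t by rewrite -expr2 /lam sqr_sqrtr // ltW.
have hh : h * h = 1 / 2 by rewrite -expr2 /h sqr_sqrtr //; lra.
have ss : s * s = (m.+1)%:R / (m.+2)%:R.
  by rewrite -expr2 /s sqr_sqrtr // divr_ge0 // ltW.
have cs : (m.+1)%:R * (s * s) = c.
  by rewrite ss /c; field; rewrite m2'.
have quad : 2 * (t * t) - (2 + 2 * c) * t + c = 0.
  have -> : 2 * (t * t) - (2 + 2 * c) * t + c = (r ^+ 2 - (1 + c ^+ 2)) / 2.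
    by rewrite /t; field.
  by rewrite rr subrr mul0r.
have lam0 : 0 < lam by rewrite /lam sqrtr_gt0.
have Enat (a b : nat) : (a.+1)%:R = a%:R + 1 :> R by rewrite -addn1 natrD.
have E01 : E R m 0 1 = h.
  rewrite /E /Dg /=; congr Num.sqrt; field.
  by rewrite m2'.
have E10 : E R m 1 0 = h.
  rewrite /E /Dg /=; congr Num.sqrt; field.
  first [by rewrite m2' | by rewrite addrC m2'].
have E12 : E R m 1 2 = h.
  by rewrite /E /Dg /=; congr Num.sqrt; field.
have E21 : E R m 2 1 = h.
  by rewrite /E /Dg /=; congr Num.sqrt; field.
have Es b : E R m 0 b.+3 = s.
  rewrite /E /Dg /=; congr Num.sqrt; field.
  first [by rewrite m2' | by rewrite addrC m2'].
have Es' b : E R m b.+3 0 = s.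
  rewrite /E /Dg /=; congr Num.sqrt; field.
  first [by rewrite m2' | by rewrite addrC m2'].
have eig : eigenvalue (ABC_matrix R (@S_adj m.+4)) lam.
  apply/eigenvalueP; exists (\row_j Vf lam t h s (val j)); last first.
    apply/eqP => /rowP /(_ (@Ordinal m.+4 2 erefl)); rewrite !mxE /Vf /= => l0.
    by move: lam0; rewrite l0 ltxx.
  apply/rowP => k; rewrite !mxE.
  under eq_bigr => j _ do rewrite AE mxE.
  rewrite -(big_mkord xpredT (fun j => Vf lam t h s j * E R m j k)).
  rewrite big_ltn // big_ltn // big_ltn // big_ltn //.
  rewrite (eq_big_nat _ _ (F2 := fun _ => if val k == 0%N then s * (2 * t - 1) * s else 0)); last first.
    move=> [|[|[|[|j]]]] // _; case: k => [[|b] hb] /=.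
      by rewrite Es' /Vf /= mulrA.
    by rewrite /E /= mulr0.
  rewrite sumr_const_nat.
  have -> : (m.+4 - 4 = m)%N by lia.
  case: k => b hb /=.
  case: b hb => [|[|[|b]]] hb.
  - rewrite E10 (Es' 0%N) /E /Vf /= -mulr_natr.
    transitivity (2 * t * (h * h) + (m.+1)%:R * (s * s) * (2 * t - 1)).
      by rewrite (Enat m m); ring.
    rewrite hh cs; transitivity ((lam * lam) * (2 * t - 1)); last by ring.
    rewrite ll; nra.
  - rewrite E01 E21 /E /Vf /= mul0rn; ring.
  - rewrite E12 /E /Vf /= mul0rn.
    transitivity (2 * t * (h * h)); first by ring.
    by rewrite hh ll; field.
  - rewrite Es /E /Vf /= mul0rn; ring.
have B := @eig_ub R _ (ABC_matrix R (@S_adj m.+4)).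
apply: (@lt_le_trans _ _ lam).
  rewrite /lam ltr_sqrt // -[m.+4]addn4 natrD; lra.
rewrite /rho_ABC; apply: sup_upper_bound => //; split; first by exists lam.
by exists (\sum_i \sum_j `|ABC_matrix R (@S_adj m.+4) i j|) => x; apply: B.
Qed.
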